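(* Let $(\mathcal D,T)$ be a finite basic quasi-schemoid, $(\mathcal C,S)$ a finite quasi-schemoid whose underlying category is a groupoid, and $\phi:(\mathcal C,S)\to(\mathcal D,T)$ an admissible morphism. Then the $\mathbb K$-linear map $\mathbb K(\phi):\mathbb K(\mathcal C,S)\to\mathbb K(\mathcal D,T)$ defined by $\mathbb K(\phi)(s_\pi)=n^\phi_\pi\, s_{\phi(\pi)}$ for $\pi\in S$ is an algebra homomorphism.
   Context: Write $s(f),t(f)$ for source and target. A quasi-schemoid is a pair $(\mathcal C,S)$ with $\mathcal C$ a small category and $S$ a partition of $mor(\mathcal C)$ into nonempty blocks such that for all $\sigma,\tau,\mu\in S$ and $f,g\in\mu$ the sets $\{(a,b)\in\sigma\times\tau: s(a)=t(b), a\circ b=f\}$ and the analogous set for $g$ have equal cardinality, denoted $p^\mu_{\sigma\tau}$. It is finite if $mor(\mathcal C)$ is finite; unital if every block meeting $\{1_x\}$ is contained in it; basic if unital and $\mathcal C$ is a groupoid. $\mathbb K$ is a commutative ring with unit. The category algebra $\mathbb K\mathcal C$ is the free $\mathbb K$-module on $mor(\mathcal C)$ with product $a\cdot b=a\circ b$ if $s(a)=t(b)$ and $0$ otherwise; $s_\sigma=\sum_{f\in\sigma}f$, and the schemoid algebra $\mathbb K(\mathcal C,S)$ is the subalgebra of $\mathbb K\mathcal C$ spanned (freely) by the $s_\sigma$, $\sigma\in S$. A morphism of quasi-schemoids $\phi$ is a functor such that each $\phi(\sigma)$ lies in a unique block of the target, also denoted $\phi(\sigma)$; it is admissible if for every $x\in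 ob(\mathcal C)$, $\sigma\in S$ and $g\in\phi(\sigma)$ with $t(g)=\phi(x)$ there exists $f\in\sigma$ with $t(f)=x$ and $\phi(f)=g$. Under the hypotheses, for each $\sigma\in S$ there is a positive integer $n^\phi_\sigma$ with $\#(\phi^{-1}(g)\cap\{f\in\sigma:t(f)=x\})=n^\phi_\sigma$ for all $x$ and all $g\in\phi(\sigma)$ with $t(g)=\phi(x)$. *)

(* Defs.v *)
From HB Require Import structures.
From mathcomp Require Import all_boot all_order all_algebra.
Set Implicit Arguments. Unset Strict Implicit. Unset Printing Implicit Defensive.
Import GRing.Theory.
Local Open Scope ring_scope.

(* A finite category, given by its data; the axioms are in [is_category].
   [comp a b] is "a o b" and is only meaningful when [src a = tgt b]. *)
Record qcat := QCat {
  ob : finType;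
  mor : finType;
  src : mor -> ob;
  tgt : mor -> ob;
  idm : ob -> mor;
  comp : mor -> mor -> mor }.

Definition is_category (C : qcat) : Prop :=
  [/\ (forall x : ob C, src (idm x) = x /\ tgt (idm x) = x),
      (forall a b : mor C, src a = tgt b -> src (comp a b) = src b /\ tgt (comp a b) = tgt a),
      (forall a : mor C, comp a (idm (src a)) = a /\ comp (idm (tgt a)) a = a)
    & (forall a b c : mor C, src a = tgt b -> src b = tgt c ->
         comp a (comp b c) = comp (comp a b) c)].

Definition groupoid (C : qcat) : Prop :=
  forall a : mor C, exists b : mor C,
    [/\ src b = tgt a, tgt b = src a,
        comp a b = idm (tgt a) & comp b a = idm (src a)].

Definition nstruct (C : qcat) (sigma tau : {set mor C}) (f : mor C) : nat :=
  #|[set p : mor C * mor C | [&& p.1 \in sigma, p.2 \in tau,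
                                 src p.1 == tgt p.2 & comp p.1 p.2 == f]]|.

(* S is a partition of mor(C) into nonempty blocks (finset's [partition]
   includes [set0 \notin S]) satisfying the structure-constant condition. *)
Definition quasi_schemoid (C : qcat) (S : {set {set mor C}}) : Prop :=
  partition S [set: mor C] /\
  forall sigma tau mu, sigma \in S -> tau \in S -> mu \in S ->
    forall f g, f \in mu -> g \in mu -> nstruct sigma tau f = nstruct sigma tau g.

Definition unital (C : qcat) (S : {set {set mor C}}) : Prop :=
  forall sigma, sigma \in S -> (exists x, idm x \in sigma) ->
    sigma \subset [set idm x | x : ob C].

Definition basic (C : qcat) (S : {set {set mor C}}) : Prop :=
  unital S /\ groupoid C.

Record functor (C D : qcat) := Functor {
  fob : ob C -> ob D;
  fmor : mor C -> mor D }.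

Definition is_functor (C D : qcat) (phi : functor C D) : Prop :=
  [/\ (forall a, src (fmor phi a) = fob phi (src a)),
      (forall a, tgt (fmor phi a) = fob phi (tgt a)),
      (forall x, fmor phi (idm x) = idm (fob phi x))
    & (forall a b, src a = tgt b -> fmor phi (comp a b) = comp (fmor phi a) (fmor phi b))].

Definition qs_morphism (C D : qcat) (phi : functor C D)
    (S : {set {set mor C}}) (T : {set {set mor D}}) : Prop :=
  is_functor phi /\
  forall sigma, sigma \in S -> exists2 tau, tau \in T & fmor phi @: sigma \subset tau.

Definition blk_img (C D : qcat) (phi : functor C D) (T : {set {set mor D}})
    (sigma : {set mor C}) : {set mor D} :=
  match [pick f in sigma] with
  | Some f => pblock T (fmor phi f)
  | None => set0
  end.

Definition admissible (C D : qcat) (phi : functor C D)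
    (S : {set {set mor C}}) (T : {set {set mor D}}) : Prop :=
  forall (x : ob C) sigma, sigma \in S ->
    forall g, g \in blk_img phi T sigma -> tgt g = fob phi x ->
      exists f, [/\ f \in sigma, tgt f = x & fmor phi f = g].

(* n^phi_sigma, computed at x = t(f0), g = phi(f0) for a representative f0 of
   sigma; by the standing fact it does not depend on these choices. *)
Definition nphi (C D : qcat) (phi : functor C D) (sigma : {set mor C}) : nat :=
  match [pick f in sigma] with
  | Some f0 => #|[set f in sigma | (tgt f == tgt f0) && (fmor phi f == fmor phi f0)]|
  | None => 0
  end.

(* Category algebra K C: functions mor C -> K (free module on mor C). *)
Definition catalg (K : comPzRingType) (C : qcat) := {ffun mor C -> K}.

Definition catmul (K : comPzRingType) (C : qcat) (u v : catalg K C) : catalg K C :=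
  [ffun h => \sum_(p : mor C * mor C | (src p.1 == tgt p.2) && (comp p.1 p.2 == h))
               u p.1 * v p.2].

Definition sblk (K : comPzRingType) (C : qcat) (sigma : {set mor C}) : catalg K C :=
  [ffun f => (f \in sigma)%:R].

Definition in_schemoid_alg (K : comPzRingType) (C : qcat) (S : {set {set mor C}})
    (u : catalg K C) : Prop :=
  exists c : {set mor C} -> K,
    u = [ffun f => \sum_(sigma in S) c sigma * sblk K sigma f].

(* K(phi): linear map with s_pi |-> n^phi_pi s_{phi(pi)}; the coefficient of
   s_sigma in u is read off as u at a representative of sigma. *)
Definition Kphi (K : comPzRingType) (C D : qcat) (phi : functor C D)
    (S : {set {set mor C}}) (T : {set {set mor D}}) (u : catalg K C) : catalg K D :=
  [ffun h => \sum_(sigma in S)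
      match [pick f in sigma] with
      | Some f0 => u f0 * (nphi phi sigma)%:R * sblk K (blk_img phi T sigma) h
      | None => 0
      end].

(* Main.v *)
Require Import Defs.
From HB Require Import structures.
From mathcomp Require Import all_boot all_order all_algebra.
Set Implicit Arguments. Unset Strict Implicit. Unset Printing Implicit Defensive.
Import GRing.Theory.
Local Open Scope ring_scope.
Local Notation comp := Defs.comp.

Section Generic.
Variables (X : qcat) (P : {set {set mor X}}).
Hypothesis partP : partition P [set: mor X].

Lemma covP : cover P = [set: mor X].
Proof. by case/and3P: partP => /eqP. Qed.
Lemma tiP : trivIset P.
Proof. by case/and3P: partP. Qed.
Lemma pbP (x : mor X) : pblock P x \in P.
Proof. by apply: pblock_mem; rewrite covP inE. Qed.
Lemma inpb (x : mor X) : x \in pblock P x.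
Proof. by rewrite mem_pblock covP inE. Qed.
Lemma pbE B x : B \in P -> x \in B -> pblock P x = B.
Proof. exact: def_pblock tiP. Qed.
Lemma nonempty B : B \in P -> exists x, x \in B.
Proof.
move=> BP; apply/set0Pn; apply: contraTneq BP => ->.
by case/and3P: partP.
Qed.
Lemma sameblk B sg x y : B \in P -> sg \in P -> x \in sg -> y \in sg ->
  (x \in B) = (y \in B).
Proof.
move=> BP sP xs ys; apply/idP/idP => H.
  by rewrite -(pbE BP H) (pbE sP xs) .
by rewrite -(pbE BP H) (pbE sP ys).
Qed.

Definition bc (K : comPzRingType) (w : catalg K X) :=
  forall B, B \in P -> forall x y, x \in B -> y \in B -> w x = w y.

Lemma alg_bc K (w : catalg K X) : in_schemoid_alg P w -> bc w.
Proof.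
case=> c -> B BP x y xB yB; rewrite !ffunE; apply: eq_bigr => s sP.
by rewrite !ffunE (sameblk sP BP xB yB).
Qed.

Lemma bc_alg K (w : catalg K X) : bc w -> in_schemoid_alg P w.
Proof.
move=> bw.
exists (fun B : {set mor X} => match [pick f in B] with Some f => w f | None => 0 end).
apply/ffunP => f; rewrite ffunE (bigD1 (pblock P f)) ?pbP //= big1 => [|s /andP[sP ne]].
  rewrite ffunE inpb addr0 mulr1; case: pickP => [g gB|]; last by move=> /(_ f); rewrite inpb.
  by apply: (bw _ (pbP f)) => //; rewrite inpb.
rewrite ffunE; case fs: (f \in s); last by rewrite mulr0.
by move: ne; rewrite (pbE sP fs) eqxx.
Qed.

Lemma mul_decomp (K : comPzRingType) (c d : {set mor X} -> K) (Q : {set {set mor X}}) h :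
  catmul [ffun f => \sum_(s in Q) c s * sblk K s f]
         [ffun f => \sum_(s in Q) d s * sblk K s f] h =
  \sum_(s in Q) \sum_(t in Q) c s * d t * (nstruct s t h)%:R.
Proof.
rewrite ffunE.
under eq_bigr do rewrite !ffunE mulr_suml.
under eq_bigr do under eq_bigr do rewrite mulr_sumr.
rewrite exchange_big /=; apply: eq_bigr => s _.
rewrite exchange_big /=; apply: eq_bigr => t _.
rewrite /nstruct -sum1_card natr_sum mulr_sumr [RHS]big_mkcond [LHS]big_mkcond.
apply: eq_bigr => p _; rewrite !ffunE inE.
case: (p.1 \in s); case: (p.2 \in t); case: (_ && _) => /=;
  by rewrite ?mulr0 ?mul0r ?mulr1.
Qed.

Lemma mul_alg K (u v : catalg K X) : quasi_schemoid P ->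
  in_schemoid_alg P u -> in_schemoid_alg P v -> bc (catmul u v).
Proof.
case=> _ qc [c ->] [d ->] B BP x y xB yB; rewrite !mul_decomp.
apply: eq_bigr => s sP; apply: eq_bigr => t tP.
by rewrite (qc s t B sP tP BP x y xB yB).
Qed.

End Generic.

Section Cat.
Variables (X : qcat).
Hypothesis cX : is_category X.
Lemma id_src (x : ob X) : src (idm x) = x. Proof. by case: cX => H _ _ _; case: (H x). Qed.
Lemma id_tgt (x : ob X) : tgt (idm x) = x. Proof. by case: cX => H _ _ _; case: (H x). Qed.
Lemma comp_src (a b : mor X) : src a = tgt b -> src (comp a b) = src b.
Proof. move=> ab; case: cX => _ H _ _; by case: (H a b ab). Qed.
Lemma comp_tgt (a b : mor X) : src a = tgt b -> tgt (comp a b) = tgt a.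
Proof. move=> ab; case: cX => _ H _ _; by case: (H a b ab). Qed.
Lemma comp1 (a : mor X) : comp a (idm (src a)) = a. Proof. by case: cX => _ _ H _; case: (H a). Qed.
Lemma comp1l (a : mor X) : comp (idm (tgt a)) a = a. Proof. by case: cX => _ _ H _; case: (H a). Qed.
Lemma compA (a b c : mor X) : src a = tgt b -> src b = tgt c ->
  comp a (comp b c) = comp (comp a b) c.
Proof. by case: cX => _ _ _ H; apply: H. Qed.
End Cat.

Lemma nstructE (X : qcat) (s t : {set mor X}) f : nstruct s t f =
  (\sum_(p : mor X * mor X)
     [&& p.1 \in s, p.2 \in t, src p.1 == tgt p.2 & comp p.1 p.2 == f])%N.
Proof.
rewrite /nstruct -sum1_card big_mkcond; apply: eq_bigr => p _; rewrite inE.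
by case: ifP.
Qed.

Section Main.
Variables (K : comPzRingType) (C D : qcat)
    (S : {set {set mor C}}) (T : {set {set mor D}}) (phi : functor C D).
Hypotheses (catC : is_category C) (catD : is_category D)
  (qsS : quasi_schemoid S) (qsT : quasi_schemoid T)
  (basT : basic T) (grpC : groupoid C)
  (morph : qs_morphism phi S T) (adm : admissible phi S T).
Local Notation F := (fmor phi).
Local Notation Fo := (fob phi).

Let partS : partition S [set: mor C] := qsS.1.
Let partT : partition T [set: mor D] := qsT.1.

Lemma Fsrc a : src (F a) = Fo (src a). Proof. by case: morph => [[]]. Qed.
Lemma Ftgt a : tgt (F a) = Fo (tgt a). Proof. by case: morph => [[]]. Qed.
Lemma Fid x : F (idm x) = idm (Fo x). Proof. by case: morph => [[]]. Qed.
Lemma Fcomp a b : src a = tgt b -> F (comp a b) = comp (F a) (F b).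
Proof. by case: morph => [[_ _ _ H]] _; apply: H. Qed.

Lemma blkE sg f : sg \in S -> f \in sg -> blk_img phi T sg = pblock T (F f).
Proof.
move=> sS fs; rewrite /blk_img; case: pickP => [f0 f0s|]; last by move/(_ f); rewrite fs.
case: morph => _ /(_ sg sS) [tau tT sub].
rewrite (pbE partT tT (subsetP sub _ (imset_f _ f0s))).
by rewrite (pbE partT tT (subsetP sub _ (imset_f _ fs))).
Qed.

Lemma blkT sg : sg \in S -> blk_img phi T sg \in T.
Proof.
move=> sS; case: (nonempty partS sS) => f fs; rewrite (blkE sS fs); exact: pbP.
Qed.

Lemma Fin_blk sg f : sg \in S -> f \in sg -> F f \in blk_img phi T sg.
Proof. move=> sS fs; rewrite (blkE sS fs); exact: inpb. Qed.

Definition eps := [set k | F k == idm (src (F k))].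

Lemma N1 (sg : {set mor C}) f1 : #|[set f in sg | (tgt f == tgt f1) && (F f == F f1)]| =
  nstruct sg eps f1.
Proof.
rewrite /nstruct.
set A := [set p : mor C * mor C | _].
rewrite -(@card_in_imset _ _ fst A); last first.
  move=> [p1 p2] [q1 q2]; rewrite !inE /= => /and4P[_ _ /eqP sp /eqP cp].
  move=> /and4P[_ _ /eqP sq /eqP cq] e; subst q1.
  case: (grpC p1) => b [sb tb e1 e2].
  have H r : src p1 = tgt r -> r = comp b (comp p1 r).
    by move=> spr; rewrite (compA catC) ?sb // e2 spr comp1l.

  by rewrite (H p2 sp) (H q2 sq) cp cq.
apply: eq_card => c; rewrite inE; apply/andP/imsetP.
  case=> cs /andP[/eqP tc /eqP Fc].
  case: (grpC c) => b [sb tb e1 e2].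
  have sbf : src b = tgt f1 by rewrite sb tc.
  exists (c, comp b f1) => //.
  rewrite inE /= cs (comp_tgt catC) // tb eqxx /=.
  rewrite (compA catC) ?tb // e1 tc comp1l // eqxx andbT inE.
  have -> : F (comp b f1) = idm (Fo (src c)).
    by rewrite Fcomp // -Fc -Fcomp ?tb // e2 Fid.
  by rewrite id_src.
case=> [[p1 p2]]; rewrite inE /= => /and4P[p1s /[1!inE] /eqP e /eqP sp /eqP cp] ->.
rewrite /= p1s -cp (comp_tgt catC) // eqxx /= Fcomp // e.
have -> : src (F p2) = src (F p1).
  by rewrite (Fsrc p1) sp -Ftgt e (id_tgt catD) (id_src catD).
by split => //; rewrite (comp1 catD).
Qed.


Lemma epsU rho x y : rho \in S -> x \in rho -> y \in rho -> (x \in eps) = (y \in eps).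
Proof.
have H a b : rho \in S -> a \in rho -> b \in rho -> a \in eps -> b \in eps.
  move=> rS ar br; rewrite !inE => /eqP ea.
  have tT := blkT rS.
  have Fa := Fin_blk rS ar; have Fb := Fin_blk rS br.
  case: basT => un _.
  have ex : exists z, idm z \in blk_img phi T rho by exists (src (F a)); rewrite -ea.
  have /subsetP sub := un _ tT ex.
  case/imsetP: (sub _ Fb) => z _ ->.
  by rewrite (id_src catD).
move=> rS xr yr; apply/idP/idP; [exact: H | exact: H].
Qed.

Lemma indE (E : {set mor C}) x :
  (forall rho, rho \in S -> forall a b, a \in rho -> b \in rho -> (a \in E) = (b \in E)) ->
  nat_of_bool (x \in E) = (\sum_(rho in S | rho \subset E) nat_of_bool (x \in rho))%N.
Proof.
move=> EU; case xE: (x \in E).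
  rewrite (bigD1 (pblock S x)) /=; last first.
    rewrite (pbP partS); apply/subsetP => y yb.
    by rewrite (EU _ (pbP partS x) y x yb (inpb partS x)).
  rewrite (inpb partS) big1 // => rho /andP[/andP[rS _] ne].
  case xr: (x \in rho) => //; by move: ne; rewrite (pbE partS rS xr) eqxx.
rewrite big1 // => rho /andP[rS /subsetP sub]; case xr: (x \in rho) => //.
by rewrite (sub _ xr) in xE.
Qed.

Lemma L1 (E : {set mor C}) sg mu f g :
  (forall rho, rho \in S -> forall a b, a \in rho -> b \in rho -> (a \in E) = (b \in E)) ->
  sg \in S -> mu \in S -> f \in mu -> g \in mu -> nstruct sg E f = nstruct sg E g.
Proof.
move=> EU sS mS fm gm.
have H h : nstruct sg E h = (\sum_(rho in S | rho \subset E) nstruct sg rho h)%N.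
  rewrite nstructE; under [RHS]eq_bigr do rewrite nstructE.
  rewrite exchange_big /=; apply: eq_bigr => p _.
  case: (p.1 \in sg); case: (src _ == _); case: (comp _ _ == _);
    rewrite /= ?andbT ?andbF ?big1_eq //;
    try by rewrite big1 // => i _; rewrite andbF.
  by rewrite (indE _ EU); apply: eq_bigr => i _; rewrite andbT.
rewrite !H; apply: eq_bigr => rho /andP[rS _].
exact: (qsS.2 sg rho mu sS rS mS f g fm gm).
Qed.


Lemma CNT sg x h : sg \in S -> tgt h = Fo x ->
  #|[set f in sg | (tgt f == x) && (F f == h)]| =
  if h \in blk_img phi T sg then nphi phi sg else 0%N.
Proof.
move=> sS th; case: ifP => hb.
  case: (adm sS hb th) => f1 [f1s tf1 Ff1].
  rewrite -tf1 -Ff1 N1 /nphi; case: pickP => [f0 f0s|]; last by move/(_ f1); rewrite f1s.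
  rewrite N1; apply: (L1 (E:=eps) _ sS sS f1s f0s).
  by move=> r rS a b ar br; apply: epsU rS ar br.
apply/eqP; rewrite cards_eq0; apply/eqP/setP => f; rewrite !inE.
apply/negbTE/negP => /andP[fs /andP[_ /eqP Ff]].
by rewrite -Ff Fin_blk in hb.
Qed.

Lemma PW (w : catalg K C) x h : bc S w -> tgt h = Fo x ->
  Kphi phi S T w h = \sum_(f | (tgt f == x) && (F f == h)) w f.
Proof.
move=> bw th; rewrite ffunE.
rewrite (eq_bigl (fun f => (f \in [set: mor C]) && ((tgt f == x) && (F f == h))));
  last by move=> f; rewrite in_setT.
rewrite (set_partition_big_cond _ partS) /=; apply: eq_bigr => sg sS.
case: pickP => [f0 f0s|s0]; last first.
  by rewrite big1 // => f /andP[fs _]; move: (s0 f); rewrite /= fs.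
rewrite (eq_bigr (fun _ => w f0)) => [|f /andP[fs _]]; last first.
  exact: (bw sg sS f f0 fs f0s).
rewrite sumr_const -cardsE CNT // ffunE /nphi.
by case: ifP => _; rewrite ?mulr1 ?mulr0 ?mulr0n // mulr_natr.
Qed.


Lemma Good sg a h : sg \in S -> a \in blk_img phi T sg -> tgt a = tgt h ->
  exists h', h' \in pblock T h /\ exists x, tgt h' = Fo x.
Proof.
move=> sS ab th.
case: (nonempty partS sS) => f0 f0s.
have nuT := blkT sS.
have Ff0 := Fin_blk sS f0s.
set nuS := blk_img phi T sg in ab nuT Ff0.
set iota := pblock T (idm (tgt a)).
have iT : iota \in T := pbP partT (idm (tgt a)).
have ii : idm (tgt a) \in iota := inpb partT (idm (tgt a)).
have q1 := qsT.2 iota nuS nuS iT nuT nuT a (F f0) ab Ff0.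
have pos : (0 < nstruct iota nuS a)%N.
  rewrite /nstruct card_gt0; apply/set0Pn; exists (idm (tgt a), a).
  by rewrite inE /= ii ab (id_src catD) eqxx (comp1l catD) eqxx.
rewrite q1 in pos; case/card_gt0P: pos => -[e b]; rewrite inE /=.
move=> /and4P[ei bnu /eqP seb /eqP ceb].
case: basT => un grpD.
have /subsetP sub := un _ iT (ex_intro (fun z => idm z \in iota) (tgt a) ii).
case/imsetP: (sub _ ei) => w _ ew; subst e.
rewrite (id_src catD) in seb; rewrite seb (comp1l catD) in ceb.
have i2 : idm (Fo (tgt f0)) \in iota by rewrite -Ftgt -ceb -seb.
case: (grpD h) => hi [shi thi e1 e2].
have i1 : idm (tgt h) \in iota by rewrite -th.
have q2 := qsT.2 (pblock T h) (pblock T hi) iota (pbP partT h) (pbP partT hi) iT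
   (idm (tgt h)) (idm (Fo (tgt f0))) i1 i2.
have pos2 : (0 < nstruct (pblock T h) (pblock T hi) (idm (tgt h)))%N.
  rewrite /nstruct card_gt0; apply/set0Pn; exists (h, hi).
  by rewrite inE /= !(inpb partT) thi eqxx e1 eqxx.
rewrite q2 in pos2; case/card_gt0P: pos2 => -[h' k]; rewrite inE /=.
move=> /and4P[h'b _ /eqP sk /eqP ck].
exists h'; split => //; exists (tgt f0).
by rewrite -(comp_tgt catD sk) ck (id_tgt catD).
Qed.


Lemma Case1 (u v : catalg K C) x h : in_schemoid_alg S u -> in_schemoid_alg S v ->
  tgt h = Fo x ->
  Kphi phi S T (catmul u v) h = catmul (Kphi phi S T u) (Kphi phi S T v) h.
Proof.
move=> hu hv th.
have bu := alg_bc partS hu; have bv := alg_bc partS hv.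
have buv := mul_alg qsS hu hv.
pose Pz := fun p : mor C * mor C =>
  [&& src p.1 == tgt p.2, tgt p.1 == x & comp (F p.1) (F p.2) == h].
transitivity (\sum_(p | Pz p) u p.1 * v p.2).
  rewrite (PW buv th) (partition_big (fun p : mor C * mor C => comp p.1 p.2)
     (fun k => (tgt k == x) && (F k == h))) /=; last first.
    move=> [p1 p2] /and3P[/eqP sp /eqP tp /eqP cp] /=.
    by rewrite (comp_tgt catC sp) tp Fcomp // cp !eqxx.
  apply: eq_bigr => k /andP[/eqP tk /eqP Fk]; rewrite ffunE; apply: eq_bigl => -[p1 p2] /=.
  apply/idP/idP.
    by case/andP=> /eqP sp /eqP cp; rewrite /Pz /= -(comp_tgt catC sp) -Fcomp // cp tk Fk sp !eqxx.
  by rewrite /Pz /=; case/andP=> /and3P[-> _ _ ->].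
symmetry; rewrite ffunE (partition_big (fun p : mor C * mor C => (F p.1, F p.2))
   (fun q : mor D * mor D => (src q.1 == tgt q.2) && (comp q.1 q.2 == h))) /=; last first.
  by move=> [p1 p2] /and3P[/eqP sp _ /eqP cp] /=; rewrite Fsrc Ftgt sp cp !eqxx.
apply: eq_bigr => -[q1 q2] /andP[/eqP sq /eqP cq] /=.
have tq1 : tgt q1 = Fo x by rewrite -th -cq (comp_tgt catD sq).
rewrite (PW bu tq1) mulr_suml.
transitivity (\sum_(f | (tgt f == x) && (F f == q1))
   \sum_(g | (tgt g == src f) && (F g == q2)) u f * v g).
  apply: eq_bigr => f /andP[_ /eqP Ff].
  rewrite (PW (x:=src f) bv); first by rewrite mulr_sumr.
  by rewrite -sq -Ff Fsrc.
rewrite pair_big_dep; apply: eq_bigl => -[p1 p2] /=.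
rewrite xpair_eqE; apply/idP/idP.
  case/and3P=> /andP[tx /eqP F1] /eqP t2 /eqP F2.
  by rewrite /Pz /= F1 F2 t2 cq tx !eqxx.
by rewrite /Pz /=; case/and3P => /and3P[/eqP sp -> _] /eqP F1 /eqP F2; rewrite F1 F2 sp !eqxx.
Qed.


Lemma mainL (u v : catalg K C) : in_schemoid_alg S u -> in_schemoid_alg S v ->
  Kphi phi S T (catmul u v) = catmul (Kphi phi S T u) (Kphi phi S T v).
Proof.
move=> hu hv; apply/ffunP => h.
have Kbc (w : catalg K C) : bc T (Kphi phi S T w).
  move=> B BT a b aB bB; rewrite !ffunE; apply: eq_bigr => sg sS.
  case: pickP => // f0 _; by rewrite !ffunE (sameblk partT (blkT sS) BT aB bB).
have bR : bc T (catmul (Kphi phi S T u) (Kphi phi S T v)) :=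
  mul_alg qsT (bc_alg partT (Kbc u)) (bc_alg partT (Kbc v)).
case: (boolP [exists h' in pblock T h, [exists x, tgt h' == Fo x]]) =>
   [/exists_inP[h' h'b /existsP[x /eqP tx]] | nex].
  rewrite (Kbc _ _ (pbP partT h) h h' (inpb partT h) h'b).
  rewrite (bR _ (pbP partT h) h h' (inpb partT h) h'b).
  exact: (Case1 hu hv tx).
have noG sg a : sg \in S -> a \in blk_img phi T sg -> tgt a = tgt h -> False.
  move=> sS ab ta; case: (Good sS ab ta) => h' [h'b [x tx]].
  move/negP: nex; apply; apply/exists_inP; exists h' => //.
  by apply/existsP; exists x; apply/eqP.
rewrite ffunE big1 => [|sg sS].
  rewrite ffunE big1 // => -[a b] /andP[/eqP sab /eqP cab] /=.
  have ta : tgt a = tgt h by rewrite -cab (comp_tgt catD sab).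
  suff -> : Kphi phi S T u a = 0 by rewrite mul0r.
  rewrite ffunE big1 // => sg sS; case: pickP => // f0 _; rewrite ffunE.
  case ab: (a \in blk_img phi T sg); last by rewrite mulr0.
  by case: (noG sg a sS ab ta).
case: pickP => // f0 _; rewrite [sblk _ _ _]ffunE.
case hb: (h \in blk_img phi T sg); last by rewrite mulr0.
by case: (noG sg h sS hb erefl).
Qed.

End Main.

Theorem proposition6p7 (K : comPzRingType) (C D : qcat)
    (S : {set {set mor C}}) (T : {set {set mor D}}) (phi : functor C D) :
  is_category C -> is_category D ->
  quasi_schemoid S -> quasi_schemoid T ->
  basic T -> groupoid C ->
  qs_morphism phi S T -> admissible phi S T ->
  forall u v : catalg K C, in_schemoid_alg S u -> in_schemoid_alg S v ->
    Kphi phi S T (catmul u v) = catmul (Kphi phi S T u) (Kphi phi S T v).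
Proof.
move=> cC cD qS qT bT gC mo ad u v hu hv.
by eapply mainL; eassumption.
Qed.
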